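(* Let $H\ge 1$, $S\ge1$, let $D=[d_{\theta s}]\in\mathbb{R}^{H\times S}$, let $x_k=[x_{1k},\ldots,x_{Sk}]^\top\in\mathbb{R}^S$ have strictly positive entries summing to $1$, and let $\theta^\star_k\in\{1,\ldots,H\}$ be the unique minimizer of $\theta\mapsto\sum_{s=1}^S d_{\theta s}x_{sk}$. Define $B_k=(\mathbb{1}_He_{\theta^\star_k}^\top-I_H)D$, $C_k=\begin{bmatrix}B_k\\ \mathbb{1}_S^\top\end{bmatrix}\in\mathbb{R}^{(H+1)\times S}$, $y_k=B_kx_k\in\mathbb{R}^H$ (so $y_k(\theta)=\sum_{s}(d_{\theta^\star_k s}-d_{\theta s})x_{sk}$) and $\tilde y_k=\begin{bmatrix}y_k\\1\end{bmatrix}$. Then the constrained system ''find $\tilde x_k\in\mathbb{R}^S$ with $\tilde y_k=C_k\tilde x_k$ and all entries of $\tilde x_k$ strictly positive'' admits a unique solution if and only if $\mathrm{rank}(C_k)=S$. Consequently, a necessary condition for this system to have a unique solution is $H\ge S$.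
   Context: Interpretation: in a weakly-connected network with $S$ sending sub-networks that are internally homogeneous (all agents in sending sub-network $s$ have the same true distribution $f^{(s)}$ and the same likelihoods $L^{(s)}(\theta)$, $\theta\in\{1,\ldots,H\}$), $d_{\theta s}=D[f^{(s)}\|L^{(s)}(\theta)]$ is the KL divergence, $x_{sk}$ is the aggregate limiting weight from sending sub-network $s$ to receiving agent $k$, and $y_k$ is the vector of limiting normalized log-beliefs at agent $k$; recovering $x_k$ from $y_k$ (with $D$ known) is the topology learning problem. $e_m$ denotes the $m$-th canonical basis vector of $\mathbb{R}^H$, $\mathbb{1}_L$ the all-ones vector of length $L$. *)

(* Defs.v *)
From mathcomp Require Import all_boot all_order all_algebra.
Set Implicit Arguments. Unset Strict Implicit. Unset Printing Implicit Defensive.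
Import Order.TTheory GRing.Theory Num.Theory.
Local Open Scope ring_scope.

Definition Bmat (R : ringType) (H S : nat) (D : 'M[R]_(H, S)) (ts : 'I_H)
  : 'M[R]_(H, S) :=
  ((const_mx 1 : 'cV[R]_H) *m (delta_mx 0 ts : 'rV[R]_H) - 1%:M) *m D.

Definition Cmat (R : ringType) (H S : nat) (D : 'M[R]_(H, S)) (ts : 'I_H)
  : 'M[R]_(H + 1, S) :=
  col_mx (Bmat D ts) (const_mx 1 : 'rV[R]_S).

Definition yvec (R : ringType) (H S : nat) (D : 'M[R]_(H, S)) (ts : 'I_H)
  (x : 'cV[R]_S) : 'cV[R]_H := Bmat D ts *m x.

Definition ytvec (R : ringType) (H S : nat) (D : 'M[R]_(H, S)) (ts : 'I_H)
  (x : 'cV[R]_S) : 'cV[R]_(H + 1) :=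
  col_mx (yvec D ts x) (const_mx 1 : 'cV[R]_1).

(* Main.v *)
Require Import Defs.
From mathcomp Require Import all_boot all_order all_algebra.
Import Order.TTheory GRing.Theory Num.Theory.
From mathcomp Require Import zify ring lra.
Local Open Scope ring_scope.

Lemma rankC_le (R : realFieldType) (H S : nat) (D : 'M[R]_(H, S)) (ts : 'I_H) :
  (\rank (Cmat D ts) <= H)%N.
Proof.
pose u : 'rV[R]_(H + 1) := delta_mx 0 (lshift 1 ts).
have uC : u *m Cmat D ts = 0.
  apply/matrixP => i j; rewrite !mxE (bigD1 (lshift 1 ts)) //= big1 ?addr0.
    rewrite !mxE eqxx /=.
    rewrite (unsplitK (inl ts : 'I_H + 'I_1)); apply/eqP; rewrite mulf_eq0; apply/orP; right; apply/eqP.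
    rewrite /Bmat !mxE big1 // => k _.
    rewrite !mxE (bigD1 ord0) //= big1 ?addr0; last first.
      by move=> l; rewrite !mxE; case: l => [[|]] //.
    by rewrite !mxE eqxx /= mul1r eq_sym subrr mul0r.
  by move=> k /negbTE hk; rewrite !mxE hk andbF mul0r.
have := mxrankS (_ : (u <= kermx (Cmat D ts))%MS).
rewrite sub_kermx uC eqxx mxrank_ker mxrank_delta => /(_ isT) h.
move: (rank_leq_row (Cmat D ts)) h; lia.
Qed.

Theorem lemma1 (R : realFieldType) (H S : nat) (hH : (1 <= H)%N) (hS : (1 <= S)%N)
  (D : 'M[R]_(H, S)) (x : 'cV[R]_S) (ts : 'I_H)
  (xpos : forall s, 0 < x s 0) (xsum : \sum_(s < S) x s 0 = 1)
  (ts_min : forall th, (D *m x) ts 0 <= (D *m x) th 0)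
  (ts_uniq : forall th, (forall th', (D *m x) th 0 <= (D *m x) th' 0) -> th = ts) :
  ((exists! xt : 'cV[R]_S, ytvec D ts x = Cmat D ts *m xt /\ forall s, 0 < xt s 0)
     <-> \rank (Cmat D ts) = S)
  /\ ((exists! xt : 'cV[R]_S, ytvec D ts x = Cmat D ts *m xt /\ forall s, 0 < xt s 0)
       -> (S <= H)%N).
Proof.
have Cx : ytvec D ts x = Cmat D ts *m x.
  rewrite /ytvec /Cmat mul_col_mx; congr col_mx; apply/matrixP => i j.
  rewrite !mxE (ord1 i) (ord1 j); under eq_bigr => s _ do rewrite mxE mul1r; by rewrite xsum.
set C := Cmat D ts.
have key : (exists! xt : 'cV[R]_S, ytvec D ts x = C *m xt /\ forall s, 0 < xt s 0)
     <-> \rank C = S.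
  split.
  - move=> [xt [[hxt hpos] huniq]].
    apply/eqP; rewrite eqn_leq rank_leq_col /= col_leq_rank -cokermx_eq0.
    apply/negPn/negP => hnz.
    set K := cokermx C in hnz.
    have : ~~ [forall j, col j K == 0].
      apply: contra hnz => /forallP h; apply/eqP/matrixP => a b.
      by move/eqP/matrixP: (h b) => /(_ a 0); rewrite !mxE.
    rewrite negb_forall => /existsP [j hj].
    set v := col j K in hj.
    have Cv : C *m v = 0.
      by rewrite /v colE mulmxA mulmx_coker mul0mx.
    clearbody v.
    pose mu := \sum_s `|v s 0| / x s 0 + 1.
    have sum_ge0 : 0 <= \sum_s `|v s 0| / x s 0.
      by apply: sumr_ge0 => s _; rewrite divr_ge0 // ltW.
    have mu_pos : 0 < mu by rewrite /mu; lra.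
    have P1 : ytvec D ts x = C *m (x + mu^-1 *: v) /\ forall s, 0 < (x + mu^-1 *: v) s 0.
      split; first by rewrite mulmxDr -scalemxAr Cv scaler0 addr0.
      move=> s; rewrite !mxE.
      have h1 : `|v s 0| / x s 0 < mu.
        rewrite /mu (bigD1 s) //=.
        have : 0 <= \sum_(i | i != s) `|v i 0| / x i 0.
          by apply: sumr_ge0 => i _; rewrite divr_ge0 // ltW.
        lra.
      rewrite ltr_pdivrMr // in h1.
      have h2 : - v s 0 <= `|v s 0| by rewrite -normrN ler_norm.
      rewrite -(pmulr_rgt0 _ mu_pos) mulrDr mulrA mulfV ?mul1r; last by rewrite gt_eqF.

      lra.
    have P0 : ytvec D ts x = C *m x /\ forall s, 0 < x s 0 by [].
    have e1 := huniq _ P1; have e0 := huniq _ P0.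
    move: hj; apply/negP; rewrite negbK.
    have : mu^-1 *: v = 0.
      by apply: (@addrI _ x); rewrite addr0 -e1 -e0.
    move/eqP; rewrite scaler_eq0 invr_eq0 gt_eqF //=.
  - move=> hr; exists x; split; first by [].
    move=> xt [hxt _].
    have hf : row_full C by rewrite -col_leq_rank hr.
    case/row_fullP: hf => Bm hBm.
    have : C *m (xt - x) = 0 by rewrite mulmxBr -hxt -Cx subrr.
    move=> h; apply/eqP; rewrite eq_sym -subr_eq0; apply/eqP.
    by rewrite -(mul1mx (xt - x)) -hBm -mulmxA h mulmx0.
split; first exact: key.
by move=> /key <-; apply: rankC_le.
Qed.
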